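(* $D(\ell_1)>1$; that is, there exist a locally finite metric space $A$ and a constant $C\ge1$ such that every finite subset of $A$ admits a bilipschitz embedding into $\ell_1$ with distortion $\le C$, but $A$ admits no bilipschitz embedding into $\ell_1$ with distortion $\le C$.
   Context: A metric space is locally finite if every ball of finite radius in it has finite cardinality. For metric spaces $(A,d_A),(Y,d_Y)$ and $C\ge1$, a map $f:A\to Y$ is a $C$-bilipschitz embedding if there is $r>0$ with $r\,d_A(u,v)\le d_Y(f(u),f(v))\le rC\,d_A(u,v)$ for all $u,v\in A$; the distortion of $f$ is the least such $C$. For a Banach space $X$ and $\alpha\ge1$, write $D(X)\le\alpha$ if for every locally finite metric space $A$ and every $C\ge1$ such that all finite subsets of $A$ admit bilipschitz embeddings into $X$ with distortion $\le C$, the space $A$ itself admits a bilipschitz embedding into $X$ with distortion $\le\alpha C$. ''$D(X)>1$'' means that $D(X)\le1$ fails. *)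

(* Defs.v *)
From Stdlib Require Import Reals List.
Open Scope R_scope.

Record MetricSpace : Type := {
  pt :> Type;
  dist : pt -> pt -> R;
  dist_nonneg : forall x y, 0 <= dist x y;
  dist_eq0 : forall x y, dist x y = 0 <-> x = y;
  dist_sym : forall x y, dist x y = dist y x;
  dist_tri : forall x y z, dist x z <= dist x y + dist y z
}.

Definition locally_finite (A : MetricSpace) : Prop :=
  forall (x : A) (r : R), exists l : list A,
    forall y : A, dist A x y <= r -> In y l.

Definition in_l1 (x : nat -> R) : Prop :=
  exists s, infinite_sum (fun n => Rabs (x n)) s.

Definition l1_dist (x y : nat -> R) (s : R) : Prop :=
  infinite_sum (fun n => Rabs (x n - y n)) s.

Definition bilip_into_l1_on (A : MetricSpace) (S : A -> Prop)
    (f : A -> nat -> R) (C : R) : Prop :=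
  (forall u, S u -> in_l1 (f u)) /\
  exists r, 0 < r /\
    forall u v, S u -> S v ->
      exists s, l1_dist (f u) (f v) s /\
        r * dist A u v <= s /\ s <= r * C * dist A u v.

Definition embeds_l1_on (A : MetricSpace) (S : A -> Prop) (C : R) : Prop :=
  exists f : A -> nat -> R, bilip_into_l1_on A S f C.

(* Main.v *)
Require Import Defs.
From Stdlib Require Import Reals List.
Open Scope R_scope.
From Stdlib Require Import Lra Lia Bool ProofIrrelevance.


Fixpoint prefixb (s t : list bool) : bool :=
  match s, t with
  | nil, _ => true
  | _ :: _, nil => false
  | b :: s', c :: t' => Bool.eqb b c && prefixb s' t'
  end.

Lemma pre_refl s : prefixb s s = true.
Proof. induction s; simpl; auto. rewrite eqb_reflx; auto. Qed.

Lemma pre_trans s t u : prefixb s t = true -> prefixb t u = true -> prefixb s u = true.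
Proof.
  revert t u; induction s as [|a s IH]; intros [|b t] [|c u]; simpl; auto; try discriminate.
  intros H1 H2. apply andb_prop in H1; apply andb_prop in H2.
  destruct H1 as [E1 H1]; destruct H2 as [E2 H2].
  apply eqb_prop in E1; apply eqb_prop in E2; subst. rewrite eqb_reflx. simpl. eauto.
Qed.

Lemma pre_len s t : prefixb s t = true -> (length s <= length t)%nat.
Proof.
  revert t; induction s as [|a s IH]; intros [|b t]; simpl; try lia; try discriminate.
  intros H; apply andb_prop in H; destruct H as [_ H]. apply IH in H; lia.
Qed.

Lemma pre_eqlen s t : prefixb s t = true -> length t = length s -> s = t.
Proof.
  revert t; induction s as [|a s IH]; intros [|b t]; simpl; auto; try discriminate.
  intros H L; apply andb_prop in H; destruct H as [E H]. apply eqb_prop in E; subst.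
  f_equal; apply IH; auto.
Qed.

Lemma pre_common x y z : prefixb x y = true -> prefixb z y = true ->
  prefixb x z = true \/ prefixb z x = true.
Proof.
  revert y z; induction x as [|a x IH]; intros [|b y] [|c z]; simpl; auto; try discriminate.
  intros H1 H2. apply andb_prop in H1; apply andb_prop in H2.
  destruct H1 as [E1 H1]; destruct H2 as [E2 H2].
  apply eqb_prop in E1; apply eqb_prop in E2; subst. rewrite eqb_reflx. simpl. eauto.
Qed.

Lemma pre_app s u : prefixb s (s ++ u) = true.
Proof. induction s; simpl; auto. rewrite eqb_reflx; auto. Qed.

Lemma pre_child s b c : prefixb (s ++ b :: nil) (s ++ c :: nil) = Bool.eqb b c.
Proof. induction s; simpl; [apply andb_true_r| rewrite eqb_reflx; auto]. Qed.

Lemma pre_child_par s b : prefixb (s ++ b :: nil) s = false.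
Proof.
  destruct (prefixb (s ++ b :: nil) s) eqn:E; auto.
  apply pre_len in E. rewrite length_app in E; simpl in E; lia.
Qed.

Definition opre (o : option (list bool)) (a : list bool) : bool :=
  match o with None => false | Some s => prefixb s a end.

Definition meet (x y : option (list bool)) : option (list bool) :=
  match x, y with
  | Some s, Some t => if prefixb s t then Some t else if prefixb t s then Some s else None
  | _, _ => None
  end.

Definition mu (o : option (list bool)) : R :=
  match o with None => 0 | Some s => (/2) ^ length s end.

Lemma opre_meet x y a : opre (meet x y) a = opre x a && opre y a.
Proof.
  destruct x as [s|], y as [t|]; simpl; auto; [|destruct (prefixb s a); auto].
  destruct (prefixb s t) eqn:E1; simpl.
  - destruct (prefixb t a) eqn:E2; simpl.
    + rewrite (pre_trans _ _ _ E1 E2); auto.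
    + destruct (prefixb s a); auto.
  - destruct (prefixb t s) eqn:E2; simpl.
    + destruct (prefixb s a) eqn:E3; simpl; auto.
      rewrite (pre_trans _ _ _ E2 E3); auto.
    + destruct (prefixb s a) eqn:E3, (prefixb t a) eqn:E4; auto.
      destruct (pre_common _ _ _ E3 E4); congruence.
Qed.

Lemma meet_comm x y : meet x y = meet y x.
Proof.
  destruct x as [s|], y as [t|]; simpl; auto.
  destruct (prefixb s t) eqn:E1, (prefixb t s) eqn:E2; auto.
  assert (s = t) by (apply pre_eqlen; auto; apply Nat.le_antisymm; apply pre_len; auto).
  subst; auto.
Qed.

Lemma half_pos n : 0 < (/2) ^ n.
Proof. apply pow_lt; lra. Qed.

Lemma half_le m n : (m <= n)%nat -> (/2) ^ n <= (/2) ^ m.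
Proof.
  induction 1; [lra|]. simpl. pose proof (half_pos m0). lra.
Qed.

Lemma mu_nonneg x : 0 <= mu x.
Proof. destruct x; simpl; [apply Rlt_le, half_pos|lra]. Qed.

Lemma mu_meet_l x y : mu (meet x y) <= mu x.
Proof.
  destruct x as [s|], y as [t|]; simpl; try lra; try apply mu_nonneg.
  destruct (prefixb s t) eqn:E1; simpl.
  - apply half_le, pre_len; auto.
  - destruct (prefixb t s); simpl; [lra|apply Rlt_le, half_pos].
  - apply Rlt_le, half_pos.
Qed.

Lemma mu_meet_r x y : mu (meet x y) <= mu y.
Proof. rewrite meet_comm; apply mu_meet_l. Qed.

Definition d0 x y := mu x + mu y - 2 * mu (meet x y).

Lemma d0_nonneg x y : 0 <= d0 x y.
Proof. unfold d0; pose proof (mu_meet_l x y); pose proof (mu_meet_r x y); lra. Qed.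

Lemma d0_sym x y : d0 x y = d0 y x.
Proof. unfold d0; rewrite meet_comm; lra. Qed.

Lemma d0_eq0 x y : d0 x y = 0 -> x = y.
Proof.
  unfold d0. destruct x as [s|], y as [t|]; simpl; intros H; auto.
  - destruct (prefixb s t) eqn:E1; simpl in H.
    + assert (length t = length s).
      { apply Nat.le_antisymm; [|apply pre_len; auto].
        destruct (Compare_dec.le_lt_dec (length t) (length s)); auto.
        assert ((/2)^length t < (/2)^length s).
        { assert (HH := half_le (S (length s)) (length t) l). simpl in HH.
          pose proof (half_pos (length s)). lra. }
        lra. }
      f_equal; apply pre_eqlen; auto.
    + destruct (prefixb t s) eqn:E2; simpl in H.
      * assert (length s = length t).
        { apply Nat.le_antisymm; [|apply pre_len; auto].
          destruct (Compare_dec.le_lt_dec (length s) (length t)); auto.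
          assert ((/2)^length s < (/2)^length t).
          { assert (HH := half_le (S (length t)) (length s) l). simpl in HH.
            pose proof (half_pos (length t)). lra. }
          lra. }
        f_equal; symmetry; apply pre_eqlen; auto.
      * pose proof (half_pos (length s)); pose proof (half_pos (length t)); lra.
  - pose proof (half_pos (length s)); lra.
  - pose proof (half_pos (length t)); lra.
Qed.

Lemma mu_meet_pre s t : prefixb s t = true -> mu (meet (Some s) (Some t)) = mu (Some t).
Proof. intros H; simpl; rewrite H; auto. Qed.

Lemma d0_tri x y z : d0 x z <= d0 x y + d0 y z.
Proof.
  unfold d0.
  enough (mu (meet x y) + mu (meet y z) <= mu y + mu (meet x z)) by lra.
  pose proof (mu_nonneg (meet x z)).
  destruct x as [s|]; [|simpl; pose proof (mu_meet_l y z); lra].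
  destruct z as [u|]; [|assert (Hn : meet y None = None) by (destruct y; auto); rewrite Hn; change (meet (Some s) None) with (@None (list bool)); change (mu None) with 0; pose proof (mu_meet_r (Some s) y); lra].
  destruct y as [t|]; [simpl in *|simpl in *; lra].
  destruct (prefixb s t) eqn:E1.
  - destruct (prefixb t u) eqn:E2.
    + rewrite (pre_trans _ _ _ E1 E2). simpl. lra.
    + destruct (prefixb u t) eqn:E3; [|simpl; pose proof (half_pos (length u)); lra].
      simpl.
      destruct (pre_common _ _ _ E1 E3) as [F|F].
      * rewrite F; simpl. pose proof (half_le _ _ (pre_len _ _ E3)). lra.
      * rewrite F. destruct (prefixb s u); simpl.
        -- pose proof (half_le _ _ (pre_len _ _ E3)). lra.
        -- pose proof (half_le _ _ (pre_len _ _ E1)). lra.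
  - destruct (prefixb t s) eqn:E4;
    [|simpl; destruct (prefixb t u) eqn:E8; simpl;
      [pose proof (half_le _ _ (pre_len _ _ E8)); lra
      |destruct (prefixb u t); simpl; try lra; pose proof (half_pos (length t)); lra]].
    destruct (prefixb t u) eqn:E2.
    + simpl. destruct (prefixb s u) eqn:E5; simpl.
      * pose proof (half_le _ _ (pre_len _ _ E4)). lra.
      * destruct (prefixb u s) eqn:E6; simpl.
        -- pose proof (half_le _ _ (pre_len _ _ E2)). lra.
        -- (* incomparable extensions of t *)
           assert (Ls : (S (length t) <= length s)%nat).
           { destruct (Nat.eq_dec (length s) (length t)).
             - assert (t = s) by (apply pre_eqlen; auto). subst. congruence.
             - pose proof (pre_len _ _ E4); lia. }
           assert (Lu : (S (length t) <= length u)%nat).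
           { destruct (Nat.eq_dec (length u) (length t)).
             - assert (t = u) by (apply pre_eqlen; auto). subst. congruence.
             - pose proof (pre_len _ _ E2); lia. }
           pose proof (half_le _ _ Ls); pose proof (half_le _ _ Lu). simpl in *. lra.
    + destruct (prefixb u t) eqn:E3; simpl; [|pose proof (half_le _ _ (pre_len _ _ E4)); lra].
      rewrite (pre_trans _ _ _ E3 E4). simpl.
      destruct (prefixb s u) eqn:E7.
      * assert (s = u).
        { apply pre_eqlen; auto. apply Nat.le_antisymm; apply pre_len; auto. eapply pre_trans; eauto. }
        subst; congruence.
      * simpl in *; lra.
Qed.
Definition valid (p : nat * option (list bool)) : Prop :=
  match snd p with None => True | Some s => (length s <= fst p)%nat end.
Definition Pt := {p : nat * option (list bool) | valid p}.
Definition lvl (p : Pt) : nat := fst (proj1_sig p).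
Definition str (p : Pt) : option (list bool) := snd (proj1_sig p).
Definition cl (a b : nat) : R := if Nat.eqb a b then 0 else INR (S a) + INR (S b).
Definition dd (p q : Pt) : R := cl (lvl p) (lvl q) + d0 (str p) (str q).

Lemma cl_nonneg a b : 0 <= cl a b.
Proof. unfold cl; destruct (Nat.eqb a b); [lra|]. pose proof (pos_INR (S a)); pose proof (pos_INR (S b)); lra. Qed.

Lemma cl_sym a b : cl a b = cl b a.
Proof. unfold cl. rewrite Nat.eqb_sym. destruct (Nat.eqb b a); lra. Qed.

Lemma cl_tri a b c : cl a c <= cl a b + cl b c.
Proof.
  unfold cl. pose proof (pos_INR (S a)); pose proof (pos_INR (S b)); pose proof (pos_INR (S c)).
  destruct (Nat.eqb a c) eqn:E1, (Nat.eqb a b) eqn:E2, (Nat.eqb b c) eqn:E3; try lra.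
  all: repeat match goal with H : Nat.eqb _ _ = true |- _ => apply Nat.eqb_eq in H; subst end;
    try lra; try (rewrite Nat.eqb_refl in *; discriminate).
Qed.

Lemma cl_pos a b : cl a b = 0 -> a = b.
Proof.
  unfold cl. destruct (Nat.eqb a b) eqn:E; [intros; apply Nat.eqb_eq; auto|].
  pose proof (lt_0_INR (S a) ltac:(lia)); pose proof (lt_0_INR (S b) ltac:(lia)); lra.
Qed.

Lemma dd_nonneg p q : 0 <= dd p q.
Proof. unfold dd. pose proof (cl_nonneg (lvl p) (lvl q)); pose proof (d0_nonneg (str p) (str q)); lra. Qed.

Lemma dd_eq0 p q : dd p q = 0 <-> p = q.
Proof.
  split.
  - unfold dd. intros H.
    pose proof (cl_nonneg (lvl p) (lvl q)); pose proof (d0_nonneg (str p) (str q)).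
    assert (L1 : lvl p = lvl q) by (apply cl_pos; lra).
    assert (L2 : str p = str q) by (apply d0_eq0; lra).
    destruct p as [[k o] Hp], q as [[k' o'] Hq]. unfold lvl, str in *; simpl in *. subst.
    f_equal. apply proof_irrelevance.
  - intros ->. unfold dd, cl, d0. rewrite Nat.eqb_refl.
    destruct (str q) as [s|]; simpl; [rewrite pre_refl; simpl|]; lra.
Qed.

Lemma dd_sym p q : dd p q = dd q p.
Proof. unfold dd. rewrite cl_sym, d0_sym. auto. Qed.

Lemma dd_tri p q u : dd p u <= dd p q + dd q u.
Proof.
  unfold dd. pose proof (cl_tri (lvl p) (lvl q) (lvl u)); pose proof (d0_tri (str p) (str q) (str u)); lra.
Qed.

Definition Space : MetricSpace :=
  Build_MetricSpace Pt dd dd_nonneg dd_eq0 dd_sym dd_tri.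

Definition trunc (k : nat) (o : option (list bool)) : option (list bool) :=
  match o with None => None | Some s => Some (firstn k s) end.

Lemma trunc_valid k o : valid (k, trunc k o).
Proof. destruct o; simpl; [apply firstn_le_length|exact I]. Qed.

Definition mk (k : nat) (o : option (list bool)) : Pt := exist _ (k, trunc k o) (trunc_valid k o).

Lemma mk_eq (p : Pt) : mk (lvl p) (str p) = p.
Proof.
  destruct p as [[k o] H]. unfold mk, lvl, str; simpl.
  assert (E : trunc k o = o) by (destruct o; simpl in *; [rewrite firstn_all2; auto|auto]).
  generalize (trunc_valid k o). rewrite E. intros; f_equal; apply proof_irrelevance.
Qed.

Fixpoint allstr (n : nat) : list (list bool) :=
  match n with
  | O => nil :: nil
  | S n => map (cons true) (allstr n) ++ map (cons false) (allstr n)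
  end.

Lemma in_allstr s : In s (allstr (length s)).
Proof.
  induction s as [|b s IH]; simpl; auto.
  apply in_or_app. destruct b; [left|right]; apply in_map; auto.
Qed.

Definition allupto (M : nat) := flat_map allstr (seq 0 (S M)).

Definition ptlist (M : nat) : list Pt :=
  flat_map (fun k => mk k None :: map (fun s => mk k (Some s)) (allupto M)) (seq 0 (S M)).

Lemma in_ptlist M p : (lvl p <= M)%nat -> In p (ptlist M).
Proof.
  intros H. rewrite <- (mk_eq p). unfold ptlist. apply in_flat_map.
  exists (lvl p). split; [apply in_seq; lia|].
  destruct p as [[k o] Hp]; unfold lvl, str in *; cbn [proj1_sig fst snd] in *.
  destruct o as [s|]; [right|left; auto].
  apply (in_map (fun s => mk k (Some s))). unfold allupto. apply in_flat_map. exists (length s).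
  unfold valid in Hp; cbn in Hp. split; [apply in_seq; lia|apply in_allstr].
Qed.

Lemma Space_lf : locally_finite Space.
Proof.
  intros x r. destruct (INR_archimed 1 r ltac:(lra)) as [N HN].
  exists (ptlist (lvl x + N)). intros y Hy. apply in_ptlist.
  simpl in Hy. unfold dd, cl in Hy.
  destruct (Nat.eqb (lvl x) (lvl y)) eqn:E; [apply Nat.eqb_eq in E; lia|].
  pose proof (d0_nonneg (str x) (str y)). pose proof (pos_INR (S (lvl x))).
  destruct (Compare_dec.le_lt_dec (lvl y) (lvl x + N)); auto.
  assert (INR N <= INR (S (lvl y))) by (apply le_INR; lia). lra.
Qed.

Definition lsum (l : list R) : R := fold_right Rplus 0 l.
Definition ind (b : bool) : R := if b then 1 else 0.

Lemma sum_nth_aux (M : list R) : forall N, (length M <= S N)%nat ->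
  sum_f_R0 (fun n => nth n M 0) N = lsum M.
Proof.
  induction M as [|x M IH]; intros N HN.
  - simpl. induction N; simpl in *; try lra. rewrite IHN by lia. lra.
  - destruct N.
    + simpl in HN. destruct M; simpl in *; [lra|lia].
    + rewrite decomp_sum by lia. simpl. rewrite IH by (simpl in HN; lia). auto.
Qed.

Lemma sum_nth (M : list R) : infinite_sum (fun n => nth n M 0) (lsum M).
Proof.
  intros eps He. exists (length M). intros n Hn. rewrite sum_nth_aux by lia.
  unfold R_dist. rewrite Rminus_diag, Rabs_R0. auto.
Qed.

Lemma is_ext a b l : (forall n, a n = b n) -> infinite_sum a l -> infinite_sum b l.
Proof.
  intros E H eps He. destruct (H eps He) as [N HN]. exists N. intros n Hn.
  rewrite <- (sum_eq a b n) by auto. auto.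
Qed.

Lemma nth_map2 (L : list (Pt -> R)) (G : R -> R -> R) u v n : G 0 0 = 0 ->
  nth n (map (fun c => G (c u) (c v)) L) 0 =
  G (nth n (map (fun c => c u) L) 0) (nth n (map (fun c => c v) L) 0).
Proof.
  intros G0. revert n; induction L as [|c L IH]; intros [|n]; simpl; auto.
Qed.

Lemma lsum_app a b : lsum (a ++ b) = lsum a + lsum b.
Proof. induction a; simpl; [lra|]. rewrite IHa; lra. Qed.

Lemma lsum_lin {A} (f g h : A -> R) L :
  lsum (map (fun k => f k + g k - 2 * h k) L) = lsum (map f L) + lsum (map g L) - 2 * lsum (map h L).
Proof. induction L; simpl; [lra|]. rewrite IHL; lra. Qed.

Lemma lsum_scal {A} (f : A -> R) c L : lsum (map (fun k => c * f k) L) = c * lsum (map f L).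
Proof. induction L; simpl; [lra|]. rewrite IHL; lra. Qed.

Lemma lsum_zero {A} (f : A -> R) L : (forall a, f a = 0) -> lsum (map f L) = 0.
Proof. intros H; induction L; simpl; [lra|]. rewrite IHL, H; lra. Qed.

Lemma lsum_ext {A} (f g : A -> R) L : (forall a, f a = g a) -> lsum (map f L) = lsum (map g L).
Proof. intros H; rewrite (map_ext f g); auto. Qed.

Lemma abs_ind w a b : 0 <= w ->
  Rabs (w * ind a - w * ind b) = w * ind a + w * ind b - 2 * (w * ind (a && b)).
Proof.
  intros Hw. destruct a, b; simpl; unfold Rabs; destruct Rcase_abs; lra.
Qed.

Lemma wsum a n : lsum (map (fun k => INR (S k) * ind (Nat.eqb a k)) (seq 0 n)) =
  if Nat.ltb a n then INR (S a) else 0.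
Proof.
  induction n.
  - simpl. destruct a; simpl; lra.
  - rewrite seq_S, map_app, lsum_app, IHn. simpl.
    destruct (Compare_dec.lt_eq_lt_dec a n) as [[h|h]|h].
    + replace (Nat.ltb a n) with true by (symmetry; apply Nat.ltb_lt; lia).
      replace (Nat.ltb a (S n)) with true by (symmetry; apply Nat.ltb_lt; lia).
      replace (Nat.eqb a n) with false by (symmetry; apply Nat.eqb_neq; lia).
      unfold ind; lra.
    + subst n. replace (Nat.ltb a a) with false by (symmetry; apply Nat.ltb_ge; lia).
      replace (Nat.ltb a (S a)) with true by (symmetry; apply Nat.ltb_lt; lia).
      rewrite Nat.eqb_refl. unfold ind; lra.
    + replace (Nat.ltb a n) with false by (symmetry; apply Nat.ltb_ge; lia).
      replace (Nat.ltb a (S n)) with false by (symmetry; apply Nat.ltb_ge; lia).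
      replace (Nat.eqb a n) with false by (symmetry; apply Nat.eqb_neq; lia).
      unfold ind; lra.
Qed.

Definition blk (k : nat) (p : Pt) : R := INR (S k) * ind (Nat.eqb (lvl p) k).
Definition atom (K : nat) (a : list bool) (p : Pt) : R := (/2) ^ K * ind (opre (str p) a).
Definition coords (K : nat) : list (Pt -> R) := map blk (seq 0 (S K)) ++ map (atom K) (allstr K).
Definition F (K : nat) (p : Pt) (n : nat) : R := nth n (map (fun c => c p) (coords K)) 0.

Lemma blk_sum K u v : (lvl u <= K)%nat -> (lvl v <= K)%nat ->
  lsum (map (fun c => Rabs (c u - c v)) (map blk (seq 0 (S K)))) = cl (lvl u) (lvl v).
Proof.
  intros Hu Hv. rewrite map_map. unfold blk.
  rewrite (lsum_ext _ (fun k => INR (S k) * ind (Nat.eqb (lvl u) k) + INR (S k) * ind (Nat.eqb (lvl v) k)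
     - 2 * (INR (S k) * ind (Nat.eqb (lvl u) k && Nat.eqb (lvl v) k)))).
  2: intros; apply abs_ind, pos_INR.
  rewrite lsum_lin, !wsum.
  assert (E1 : Nat.ltb (lvl u) (S K) = true) by (apply Nat.ltb_lt; lia).
  assert (E2 : Nat.ltb (lvl v) (S K) = true) by (apply Nat.ltb_lt; lia).
  rewrite E1, E2. unfold cl.
  destruct (Nat.eqb (lvl u) (lvl v)) eqn:E.
  - apply Nat.eqb_eq in E. rewrite E.
    rewrite (lsum_ext _ (fun k => INR (S k) * ind (Nat.eqb (lvl v) k))).
    2: intros; rewrite andb_diag; auto.
    rewrite wsum, E2. lra.
  - rewrite lsum_zero. lra.
    intros k. destruct (Nat.eqb (lvl u) k) eqn:A1, (Nat.eqb (lvl v) k) eqn:A2; simpl; try lra.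
    apply Nat.eqb_eq in A1; apply Nat.eqb_eq in A2. rewrite A1, A2, Nat.eqb_refl in E. discriminate.
Qed.

Lemma count K : forall s, (length s <= K)%nat ->
  lsum (map (fun a => ind (prefixb s a)) (allstr K)) * (/2) ^ K = (/2) ^ (length s).
Proof.
  induction K as [|K IH]; intros s Hs.
  - destruct s; simpl in *; [lra|lia].
  - simpl allstr. rewrite map_app, lsum_app, !map_map.
    destruct s as [|b s].
    + simpl. simpl in IH. pose proof (IH nil ltac:(simpl; lia)). simpl in H. lra.
    + simpl in Hs. specialize (IH s ltac:(lia)).
      assert (Z : forall c, c <> b -> lsum (map (fun x => ind (prefixb (b :: s) (c :: x))) (allstr K)) = 0).
      { intros c Hc. apply lsum_zero. intros a. simpl. destruct b, c; try congruence; simpl; auto. }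
      assert (O : lsum (map (fun x => ind (prefixb (b :: s) (b :: x))) (allstr K)) =
                  lsum (map (fun a => ind (prefixb s a)) (allstr K))).
      { apply lsum_ext. intros a. simpl. rewrite eqb_reflx. auto. }
      destruct b.
      * rewrite O, (Z false) by congruence. simpl. lra.
      * rewrite O, (Z true) by congruence. simpl. lra.
Qed.

Lemma Pw_mu K o : (forall s, o = Some s -> (length s <= K)%nat) ->
  lsum (map (fun a => (/2) ^ K * ind (opre o a)) (allstr K)) = mu o.
Proof.
  intros H. destruct o as [s|].
  - rewrite lsum_scal. simpl. rewrite <- (count K s) by (apply H; auto). lra.
  - rewrite lsum_zero; simpl; auto. intros; lra.
Qed.

Lemma meet_some x y s : meet x y = Some s -> x = Some s \/ y = Some s.
Proof.
  destruct x as [a|], y as [b|]; simpl; try discriminate.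
  destruct (prefixb a b); [intros H; right; auto|]. destruct (prefixb b a); [intros H; left; auto|discriminate].
Qed.

Lemma atom_sum K u v : (forall s, str u = Some s -> (length s <= K)%nat) ->
  (forall s, str v = Some s -> (length s <= K)%nat) ->
  lsum (map (fun c => Rabs (c u - c v)) (map (atom K) (allstr K))) = d0 (str u) (str v).
Proof.
  intros Hu Hv. rewrite map_map. unfold atom.
  rewrite (lsum_ext _ (fun a => (/2)^K * ind (opre (str u) a) + (/2)^K * ind (opre (str v) a)
     - 2 * ((/2)^K * ind (opre (meet (str u) (str v)) a)))).
  2: intros; rewrite opre_meet; apply abs_ind, pow_le; lra.
  rewrite lsum_lin, !Pw_mu; auto.
  intros s Hs. destruct (meet_some _ _ _ Hs); auto.
Qed.

Lemma str_len p s : str p = Some s -> (length s <= lvl p)%nat.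
Proof. destruct p as [[k o] H]. unfold str, lvl; simpl. intros ->. exact H. Qed.

Lemma coords_sum K u v : (lvl u <= K)%nat -> (lvl v <= K)%nat ->
  lsum (map (fun c => Rabs (c u - c v)) (coords K)) = dd u v.
Proof.
  intros Hu Hv. unfold coords. rewrite map_app, lsum_app, blk_sum, atom_sum; auto.
  - intros s Hs; apply str_len in Hs; lia.
  - intros s Hs; apply str_len in Hs; lia.
Qed.

Definition maxl (l : list Pt) : nat := fold_right Nat.max 0%nat (map lvl l).

Lemma maxl_in l u : In u l -> (lvl u <= maxl l)%nat.
Proof. induction l; simpl; [tauto|]. intros [->|H]; [apply Nat.le_max_l|]. apply IHl in H. eapply Nat.le_trans; [exact H|apply Nat.le_max_r]. Qed.

Lemma finite_emb (l : list Pt) : embeds_l1_on Space (fun x => In x l) 1.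
Proof.
  exists (F (maxl l)). split.
  - intros u Hu. exists (lsum (map (fun c => Rabs (c u)) (coords (maxl l)))).
    eapply is_ext; [|apply sum_nth]. intros n. unfold F.
    rewrite (nth_map2 _ (fun x y => Rabs x) u u); auto. apply Rabs_R0.
  - exists 1. split; [lra|]. intros u v Hu Hv.
    exists (dd u v). split; [|simpl; lra].
    unfold l1_dist. rewrite <- (coords_sum (maxl l)) by (apply maxl_in; auto).
    eapply is_ext; [|apply sum_nth]. intros n. unfold F.
    rewrite (nth_map2 _ (fun x y => Rabs (x - y)) u v); auto. rewrite Rminus_0_r; apply Rabs_R0.
Qed.

Lemma le_sum (a : nat -> R) Sm m : (forall n, 0 <= a n) -> infinite_sum a Sm -> a m <= Sm.
Proof.
  intros Hp HS.
  assert (G : forall n, sum_f_R0 a n <= Sm).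
  { apply growing_ineq; [|exact HS]. intros n. simpl. pose proof (Hp (S n)); lra. }
  destruct m as [|m]; [apply (G O)|].
  pose proof (G (S m)). simpl in H. pose proof (cond_pos_sum a m Hp). lra.
Qed.

Lemma is_minus a b A B : infinite_sum a A -> infinite_sum b B ->
  infinite_sum (fun n => b n - a n) (B - A).
Proof.
  intros Ha Hb eps He. destruct (CV_minus _ _ _ _ Hb Ha eps He) as [N HN].
  exists N. intros n Hn. rewrite minus_sum. apply HN; auto.
Qed.

Lemma is_plus a b A B : infinite_sum a A -> infinite_sum b B ->
  infinite_sum (fun n => a n + b n) (A + B).
Proof.
  intros Ha Hb eps He. destruct (CV_plus _ _ _ _ Ha Hb eps He) as [N HN].
  exists N. intros n Hn. rewrite plus_sum. apply HN; auto.
Qed.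

Lemma rect4 a b c e :
  Rabs (a - e) = Rabs (a - b) + Rabs (b - e) ->
  Rabs (a - e) = Rabs (a - c) + Rabs (c - e) ->
  Rabs (b - c) = Rabs (b - a) + Rabs (a - c) ->
  Rabs (b - c) = Rabs (b - e) + Rabs (e - c) ->
  (a = b /\ c = e) \/ (a = c /\ b = e).
Proof.
  unfold Rabs.
  repeat match goal with |- context [Rcase_abs ?x] => destruct (Rcase_abs x) end;
  intros; first [left; split; lra | right; split; lra | lra].
Qed.

Section Main.
Variable f : Pt -> nat -> R.
Variable r : R.
Hypothesis Hr : 0 < r.
Hypothesis Hs : forall u v, infinite_sum (fun n => Rabs (f u n - f v n)) (r * dd u v).

Lemma betw x y z : dd x z = dd x y + dd y z ->
  forall n, Rabs (f x n - f z n) = Rabs (f x n - f y n) + Rabs (f y n - f z n).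
Proof.
  intros E n.
  pose proof (is_minus _ _ _ _ (Hs x z) (is_plus _ _ _ _ (Hs x y) (Hs y z))) as H.
  replace (r * dd x y + r * dd y z - r * dd x z) with 0 in H by (rewrite E; ring).
  assert (T : forall m, Rabs (f x m - f z m) <= Rabs (f x m - f y m) + Rabs (f y m - f z m)).
  { intros m. replace (f x m - f z m) with ((f x m - f y m) + (f y m - f z m)) by ring.
    apply Rabs_triang. }
  assert (L : Rabs (f x n - f y n) + Rabs (f y n - f z n) - Rabs (f x n - f z n) <= 0).
  { apply (le_sum (fun m => Rabs (f x m - f y m) + Rabs (f y m - f z m) - Rabs (f x m - f z m)) 0 n);
      auto. intros m; pose proof (T m); lra. }
  pose proof (T n); lra.
Qed.

Lemma rect x y x' y' :
  dd x y' = dd x y + dd y y' -> dd x y' = dd x x' + dd x' y' ->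
  dd y x' = dd y x + dd x x' -> dd y x' = dd y y' + dd y' x' ->
  forall n, (f x n = f y n /\ f x' n = f y' n) \/ (f x n = f x' n /\ f y n = f y' n).
Proof.
  intros H1 H2 H3 H4 n. apply rect4; [apply betw|apply betw|apply betw|apply betw]; auto.
Qed.

End Main.

Lemma dd_mk k j o o' : dd (mk k o) (mk j o') = cl k j + d0 (trunc k o) (trunc j o').
Proof. reflexivity. Qed.

Lemma trunc_id k s : (length s <= k)%nat -> trunc k (Some s) = Some s.
Proof. intros H; simpl; rewrite firstn_all2; auto. Qed.

Lemma cl_refl k : cl k k = 0.
Proof. unfold cl; rewrite Nat.eqb_refl; auto. Qed.

Lemma mu_child s b : mu (Some (s ++ b :: nil)) = mu (Some s) / 2.
Proof. simpl. rewrite length_app, pow_add. simpl. lra. Qed.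

Lemma d0_Ns s : d0 None (Some s) = mu (Some s).
Proof. unfold d0; simpl; lra. Qed.
Lemma d0_sN s : d0 (Some s) None = mu (Some s).
Proof. unfold d0; simpl; lra. Qed.
Lemma d0_ss s : d0 (Some s) (Some s) = 0.
Proof. unfold d0; simpl; rewrite pre_refl; simpl; lra. Qed.
Lemma d0_cs s b : d0 (Some (s ++ b :: nil)) (Some s) = mu (Some s) / 2.
Proof.
  unfold d0. unfold meet. rewrite pre_child_par, pre_app. rewrite mu_child. lra.
Qed.
Lemma d0_sc s b : d0 (Some s) (Some (s ++ b :: nil)) = mu (Some s) / 2.
Proof. rewrite d0_sym; apply d0_cs. Qed.
Lemma d0_cc s b c : b <> c -> d0 (Some (s ++ b :: nil)) (Some (s ++ c :: nil)) = mu (Some s).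
Proof.
  intros H. unfold d0, meet. rewrite !pre_child.
  replace (Bool.eqb b c) with false by (destruct b, c; simpl; congruence).
  replace (Bool.eqb c b) with false by (destruct b, c; simpl; congruence).
  rewrite !mu_child. simpl. lra.
Qed.

Section Main2.
Variable f : Pt -> nat -> R.
Variable r : R.
Hypothesis Hr : 0 < r.
Hypothesis Hs : forall u v, infinite_sum (fun n => Rabs (f u n - f v n)) (r * dd u v).

Definition Aa n k s := Rabs (f (mk k None) n - f (mk k (Some s)) n).

Lemma d0_NN : d0 None None = 0.
Proof. unfold d0; simpl; lra. Qed.

Ltac ddsimp := rewrite ?dd_mk, ?trunc_id by (auto; lia); simpl trunc;
       rewrite ?cl_refl, ?d0_Ns, ?d0_sN, ?d0_ss, ?d0_NN, ?d0_cs, ?d0_sc, ?d0_cc by congruence; rewrite ?mu_child.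

Lemma step_rect n k s : (length s <= k)%nat -> Aa n k s = Aa n (S k) s.
Proof.
  intros Hl. unfold Aa.
  assert (Hl' : (length s <= S k)%nat) by lia.
  assert (CS : cl (S k) k = cl k (S k)) by apply cl_sym.
  destruct (rect f r Hs (mk k None) (mk k (Some s)) (mk (S k) None) (mk (S k) (Some s))) with (n := n)
    as [[E1 E2]|[E1 E2]]; try (ddsimp; lra).
  - rewrite E1, E2, !Rminus_diag; auto.
  - rewrite E1, E2; auto.
Qed.

Lemma step_sq n k s : (length s < k)%nat ->
  Aa n k s = Aa n k (s ++ true :: nil) \/ Aa n k s = Aa n k (s ++ false :: nil).
Proof.
  intros Hl. unfold Aa.
  assert (Hc : forall b, (length (s ++ b :: nil) <= k)%nat) by (intros; rewrite length_app; simpl; lia).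
  pose proof (Hc true); pose proof (Hc false).
  destruct (rect f r Hs (mk k None) (mk k (Some (s ++ false :: nil)))
              (mk k (Some (s ++ true :: nil))) (mk k (Some s))) with (n := n)
    as [[E1 E2]|[E1 E2]]; try (ddsimp; lra).
  - left. rewrite <- E2. auto.
  - right. rewrite E2. auto.
Qed.

Lemma chain n : forall k, exists s, length s = k /\ Aa n 0 nil = Aa n k s.
Proof.
  induction k as [|k IH].
  - exists nil; auto.
  - destruct IH as [s [Hl E]].
    rewrite (step_rect n k s) in E by lia.
    destruct (step_sq n (S k) s) as [E'|E']; [lia| |].
    + exists (s ++ true :: nil). rewrite length_app; simpl. split; [lia|]. congruence.
    + exists (s ++ false :: nil). rewrite length_app; simpl. split; [lia|]. congruence.
Qed.

Lemma bound n k : Aa n 0 nil <= r * (/2) ^ k.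
Proof.
  destruct (chain n k) as [s [Hl E]]. rewrite E. unfold Aa.
  replace ((/2) ^ k) with (dd (mk k None) (mk k (Some s))).
  - apply (le_sum (fun m => Rabs (f (mk k None) m - f (mk k (Some s)) m))); auto.
    intros; apply Rabs_pos.
  - ddsimp. simpl. rewrite Hl. lra.
Qed.

Lemma zero n : Aa n 0 nil = 0.
Proof.
  pose proof (Rabs_pos (f (mk 0 None) n - f (mk 0 (Some nil)) n)).
  fold (Aa n 0 nil) in H.
  destruct (Req_dec (Aa n 0 nil) 0) as [E|E]; auto.
  assert (P : 0 < Aa n 0 nil / r) by (apply Rdiv_lt_0_compat; lra).
  destruct (pow_lt_1_zero (/2) ltac:(rewrite Rabs_right; lra) _ P) as [N HN].
  specialize (HN N (Nat.le_refl N)). rewrite Rabs_right in HN by (apply Rle_ge, pow_le; lra).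
  pose proof (bound n N).
  apply (Rmult_lt_compat_l r) in HN; auto.
  replace (r * (Aa n 0 nil / r)) with (Aa n 0 nil) in HN by (field; lra). lra.
Qed.

Lemma contra : False.
Proof.
  pose proof (Hs (mk 0 None) (mk 0 (Some nil))) as H.
  assert (Z : infinite_sum (fun n => Rabs (f (mk 0 None) n - f (mk 0 (Some nil)) n)) 0).
  { eapply is_ext; [|apply (sum_nth nil)]. intros n. simpl. pose proof (zero n). unfold Aa in H0.
    destruct n; simpl; lra. }
  pose proof (uniqueness_sum _ _ _ H Z).
  revert H0. ddsimp. simpl. intros. lra.
Qed.

End Main2.

Theorem theorem1p10 :
  exists (A : MetricSpace) (C : R),
    locally_finite A /\ 1 <= C /\
    (forall l : list A, embeds_l1_on A (fun x => In x l) C) /\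
    ~ embeds_l1_on A (fun _ => True) C.
Proof.
  exists Space, 1. split; [apply Space_lf|]. split; [lra|]. split; [apply finite_emb|].
  intros [f [_ [r [Hr Hd]]]].
  apply (contra f r Hr). intros u v.
  destruct (Hd u v I I) as [s [Hs [H1 H2]]].
  replace (r * dd u v) with s by (simpl in *; lra). exact Hs.
Qed.
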